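(* Let $m,k$ be natural numbers. If the leading term in the hereditary representation in base $k+1$ of the $k$-th term $G(k,m)$ of the Goodstein sequence $G(m)$ is of the form $1\cdot(k+1)^{l}$ with $k+1>l$, then $G(k+1,m)>G(k,m)$ if $l>1$, $G(k+1,m)=G(k,m)$ if $l=1$, and $G(k+1,m)<G(k,m)$ if $l=0$.
   Context: For a natural number base $b>1$, the hereditary representation $m\langle b\rangle$ of $m$ is $\sum_{i=0}^{l} a_i b^{i}$ with $0\le a_i<b$, $a_l\ne0$, each exponent itself written in hereditary representation in base $b$, recursively; its leading term is $a_l b^{l}$. $m\langle b\rangle''$ is obtained by syntactically replacing every $b$ by $b+1$ in $m\langle b\rangle$. The Goodstein sequence $G(m)=\{m, m''-1, (m''-1)''-1,\dots\}$ starts from $m$ in base $2$; its $n$-th term is $G(n,m)$, with $G(1,m)=m$ in base $2$, $G(k,m)$ written in base $k+1$, and $G(k+1,m)=G(k,m)\langle k+1\rangle''-1$. *)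

(* Defs.v *)
From mathcomp Require Import all_boot.
Set Implicit Arguments. Unset Strict Implicit. Unset Printing Implicit Defensive.

(* Hereditary base-b representation (b > 1) of n > 0:
   n = a * b^l + r  with  l = trunc_log b n (exponent of the leading term),
   a = n %/ b^l (leading digit, 0 < a < b), r = n - a * b^l < b^l,
   the exponent l and the remainder r being themselves written hereditarily. *)

Definition lead_exp (b n : nat) : nat := trunc_log b n.
Definition lead_digit (b n : nat) : nat := n %/ b ^ lead_exp b n.

(* bumpf fuel b n : value of n<b>'' (replace every b by b+1 in the hereditary
   base-b representation of n); the fuel only ensures termination
   (both l and r are < n, so fuel n.+1 suffices). *)
Fixpoint bumpf (fuel b n : nat) : nat :=
  match fuel with
  | 0 => 0
  | f.+1 =>
      if n is 0 then 0 else
      let l := trunc_log b n in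
      let a := n %/ b ^ l in
      a * b.+1 ^ (bumpf f b l) + bumpf f b (n - a * b ^ l)
  end.

Definition hbump (b n : nat) : nat := bumpf n.+1 b n.

(* Goodstein sequence: G(1,m) = m, G(k+1,m) = G(k,m)<k+1>'' - 1.
   (G(0,m) is not used by the paper; set to m.) *)
Fixpoint goodstein (k m : nat) : nat :=
  match k with
  | 0 => m
  | k'.+1 => if k' is 0 then m else hbump k'.+1 (goodstein k' m) - 1
  end.

(* Main.v *)
Require Import Defs.
From mathcomp Require Import all_boot.
From mathcomp Require Import zify.

Lemma expmono m n e : m <= n -> m ^ e <= n ^ e.
Proof. by move=> h; elim: e => // e IH; rewrite !expnS leq_mul. Qed.

Lemma bumpfS f b n : 0 < n -> bumpf f.+1 b n =
  n %/ b ^ trunc_log b n * b.+1 ^ (bumpf f b (trunc_log b n)) +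
  bumpf f b (n - n %/ b ^ trunc_log b n * b ^ trunc_log b n).
Proof. by case: n. Qed.

Lemma bumpf0 f b : bumpf f b 0 = 0.
Proof. by case: f. Qed.

Lemma bumpf_small f b x : 1 < b -> 0 < f -> x < b -> bumpf f b x = x.
Proof.
move=> b1; case: f => // f _ xb /=.
case: x xb => // x xb.
have -> : trunc_log b x.+1 = 0 by apply/eqP; rewrite trunc_log_eq0; lia.
by rewrite expn0 divn1 muln1 subnn !bumpf0 expn0 muln1 addn0.
Qed.

Lemma bumpf_ge f b n : 1 < b -> n < f -> n <= bumpf f b n.
Proof.
move=> b1; elim: f n => [//|f IH] n nf /=.
case: n nf => // n' nf; set n := n'.+1.
set l := trunc_log b n; set a := n %/ b ^ l.
have hP : b ^ l <= n by apply: trunc_logP.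
have hl : l < b ^ l by apply: ltn_expl.
have ha : 0 < a by rewrite divn_gt0 // expn_gt0; lia.
have hm : a * b ^ l <= n by rewrite /a leq_divM.
have hbl : 0 < b ^ l by rewrite expn_gt0; lia.
have h1 : l <= bumpf f b l by apply: IH; lia.
have h2 : n - a * b ^ l <= bumpf f b (n - a * b ^ l).
  apply: IH. have : b ^ l <= a * b ^ l by rewrite leq_pmull. lia.
have h3 : b ^ l <= b.+1 ^ (bumpf f b l).
  apply: (@leq_trans (b.+1 ^ l)); first by apply: expmono.
  by rewrite leq_pexp2l.
have : a * b ^ l <= a * b.+1 ^ (bumpf f b l) by rewrite leq_mul2l h3 orbT.
lia.
Qed.

Theorem lemma5 (m k l : nat) :
  0 < k ->
  0 < goodstein k m ->
  lead_digit k.+1 (goodstein k m) = 1 ->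
  lead_exp k.+1 (goodstein k m) = l ->
  l < k.+1 ->
  [/\ (1 < l -> goodstein k.+1 m > goodstein k m),
      (l = 1 -> goodstein k.+1 m = goodstein k m) &
      (l = 0 -> goodstein k.+1 m < goodstein k m)].
Proof.
case: k => // k _.
have -> : goodstein k.+2 m = hbump k.+2 (goodstein k.+1 m) - 1 by [].
set b := k.+2; set n := goodstein k.+1 m.
rewrite /lead_digit /lead_exp /hbump => n0 hd hl lb.
have b1 : 1 < b by [].
case: n n0 hd hl => // n' _; set n := n'.+1 => hd hl.
rewrite bumpfS // hd hl mul1n; rewrite hl in hd.
have hP : b ^ l <= n by rewrite -hl; apply: trunc_logP.
have hlt : l < b ^ l by apply: ltn_expl.
have hr : n - b ^ l < b ^ l.
  have := divn_eq n (b ^ l); rewrite /= in hd *.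
  have : n %% b ^ l < b ^ l by rewrite ltn_mod expn_gt0; lia.
  rewrite hd mul1n; lia.
have hbl : bumpf n b l = l.
  case: l {hl hd hr} lb hP hlt => [|l] lb hP hlt; first by rewrite bumpf0.
  apply: bumpf_small => //.
rewrite hbl mul1n; clear hl.
have hge := @bumpf_ge n b (n - b ^ l) b1 ltac:(rewrite /n in hr hP *; lia).
split=> Hl.
- have : b ^ l + 2 <= b.+1 ^ l.
    case: l Hl {hd hP hlt hr hbl hge lb} => [|[|l]] // _.
    rewrite !expnS.
    have : b ^ l <= b.+1 ^ l by apply: expmono.
    nia.
  lia.
- subst l; rewrite expn1 in hr hP *.
  rewrite bumpf_small //; lia.
- subst l; rewrite expn0 in hr hP *.
  have -> : n - 1 = 0 by lia.
  rewrite bumpf0 expn0; lia.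
Qed.
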